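(* Let $n\ge 1$, $M\ge1$ be integers and $a=(a_0,\dots,a_n)\in\mathbb{Z}^{n+1}$ with $0\le a_i\le M$ and $a_0=a_n=0$. Let $G(a)$ be the directed graph defined below. Then all tropical recurrent minimal sequences with values in $V$ satisfying $a$ are periodic if and only if $G(a)$ is a disjoint union of simple cycles.
   Context: Let $V=\{j+i/(2n+2): 0\le j<M,\ 0\le i\le 2n+2,\ i,j\in\mathbb{Z}\}$ and $W=V^{2n+1}$. A vector $z=(z_0,\dots,z_N)\in\mathbb{R}^{N+1}$ satisfies $a$ and is minimal if for each $0\le k\le N-n$ the minimum $\min_{0\le i\le n}\{a_i+z_{i+k}\}$ is attained at least twice, and for each $n\le j\le N-n$ there exists $j-n\le k\le j$ with $a_{j-k}+z_j=\min_{0\le i\le n}\{a_i+z_{k+i}\}$. The directed graph $G_0$ has as vertices the elements $(z_0,\dots,z_{2n})\in W$ which (with $N=2n$) satisfy $a$ and are minimal, with an arrow from $(z_0,\dots,z_{2n})$ to $(z'_0,\dots,z'_{2n})$ iff $z_{i+1}=z'_i$ for $0\le i\le 2n-1$ (loops allowed). $G(a)$ is obtained from $G_0$ by successively removing vertices having no incoming arrow or no outgoing arrow, as long as possible. A tropical recurrent sequence is $y=(y_j)_{j\in\mathbb{Z}}$ with real entries; it satisfies $a$ if for every $k\in\mathbb{Z}$ the minimum $\min_{0\le i\le n}\{a_i+y_{i+k}\}$ is attained for at least two different $i$; it is minimal if for every $j$ there is $k$ with $j-n\le k\le j$ and $a_{j-k}+y_j=\min_{0\le i\le n}\{a_i+y_{i+k}\}$.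 It is periodic if there is $d\ge1$ with $y_{j+d}=y_j$ for all $j$. *)

(* Defs.v *)
From mathcomp Require Import all_boot all_order all_algebra.
Set Implicit Arguments. Unset Strict Implicit. Unset Printing Implicit Defensive.
Import Order.TTheory GRing.Theory Num.Theory.
Local Open Scope ring_scope.

Definition in_V (M n : nat) (x : rat) : Prop :=
  exists j i : nat, (j < M)%N /\ (i <= 2 * n + 2)%N /\
    x = j%:R + i%:R / (2 * n + 2)%:R.

Definition is_min_at (f : nat -> rat) (n d : nat) : Prop :=
  (d <= n)%N /\ forall i : nat, (i <= n)%N -> f d <= f i.

Definition min_twice (f : nat -> rat) (n : nat) : Prop :=
  exists i1 i2 : nat, i1 <> i2 /\ is_min_at f n i1 /\ is_min_at f n i2.

Definition fin_satisfies (a : nat -> int) (n N : nat) (z : seq rat) : Prop :=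
  forall k : nat, (k <= N - n)%N ->
    min_twice (fun i => (a i)%:~R + nth 0 z (i + k)) n.

(* for n <= j <= N-n there is k with j-n <= k <= j and
   a_{j-k} + z_j = min_i (a_i + z_{k+i});  we write d = j - k *)
Definition fin_minimal (a : nat -> int) (n N : nat) (z : seq rat) : Prop :=
  forall j : nat, (n <= j)%N -> (j <= N - n)%N ->
    exists d : nat, (d <= n)%N /\
      is_min_at (fun i => (a i)%:~R + nth 0 z ((j - d) + i)) n d.

Definition G0_vertex (M n : nat) (a : nat -> int) (z : seq rat) : Prop :=
  size z = (2 * n + 1)%N /\ (forall i, (i < size z)%N -> in_V M n (nth 0 z i)) /\
  fin_satisfies a n (2 * n) z /\ fin_minimal a n (2 * n) z.

Definition G0_arrow (n : nat) (z z' : seq rat) : Prop :=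
  forall i : nat, (i <= 2 * n - 1)%N -> nth 0 z i.+1 = nth 0 z' i.

(* successive removal of vertices with no incoming or no outgoing arrow:
   stage k+1 removes from stage k the vertices without an in- or out-arrow
   (arrows of the subgraph induced on stage k). *)
Fixpoint G_stage (M n : nat) (a : nat -> int) (k : nat) (z : seq rat) : Prop :=
  match k with
  | 0 => G0_vertex M n a z
  | k'.+1 => G_stage M n a k' z /\
      (exists w, G_stage M n a k' w /\ G0_arrow n w z) /\
      (exists w, G_stage M n a k' w /\ G0_arrow n z w)
  end.

(* vertices of G(a): those never removed (the process stabilizes since G_0 is finite);
   arrows of G(a) are the arrows of G_0 between vertices of G(a). *)
Definition Ga_vertex (M n : nat) (a : nat -> int) (z : seq rat) : Prop :=
  forall k : nat, G_stage M n a k z.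

(* a directed graph (vertex predicate Vx, arrow relation E) is a disjoint union of
   simple directed cycles (loops count as cycles of length 1) *)
Definition disjoint_union_simple_cycles (T : eqType) (Vx : T -> Prop)
    (E : T -> T -> Prop) : Prop :=
  exists cs : seq (seq T),
    (forall c, c \in cs -> c <> [::]) /\
    uniq (flatten cs) /\
    (forall v, Vx v <-> v \in flatten cs) /\
    (forall u v, Vx u -> Vx v ->
       (E u v <-> exists2 c, c \in cs &
          exists i : nat, (i < size c)%N /\ u = nth u c i /\
                          v = nth u c ((i.+1) %% size c)%N)).

Definition trop_satisfies (a : nat -> int) (n : nat) (y : int -> rat) : Prop :=
  forall k : int, min_twice (fun i => (a i)%:~R + y (k + i%:Z)) n.

(* for every j there is k, j-n <= k <= j, with a_{j-k} + y_j = min_i (a_i + y_{i+k});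
   we write d = j - k *)
Definition trop_minimal (a : nat -> int) (n : nat) (y : int -> rat) : Prop :=
  forall j : int, exists d : nat, (d <= n)%N /\
    is_min_at (fun i => (a i)%:~R + y ((j - d%:Z) + i%:Z)) n d.

Definition periodic (y : int -> rat) : Prop :=
  exists d : nat, (0 < d)%N /\ forall j : int, y (j + d%:Z) = y j.

(* Main.v *)
Require Import Defs.
From mathcomp Require Import all_boot all_order all_algebra.
From mathcomp Require Import zify.
From Stdlib Require Import ClassicalEpsilon Classical.
Import Order.TTheory GRing.Theory Num.Theory.
Local Open Scope ring_scope.
Set Implicit Arguments. Unset Strict Implicit. Unset Printing Implicit Defensive.

Lemma is_min_at_ext (f g : nat -> rat) n d :
  (forall i, (i <= n)%N -> f i = g i) -> is_min_at f n d -> is_min_at g n d.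
Proof.
move=> e [dn H]; split=> // i hi; rewrite -!e //; exact: H.
Qed.

Lemma min_twice_ext (f g : nat -> rat) n :
  (forall i, (i <= n)%N -> f i = g i) -> min_twice f n -> min_twice g n.
Proof.
move=> e [i1 [i2 [ne [h1 h2]]]]; exists i1, i2; split=> //.
by split; apply: is_min_at_ext e _.
Qed.

Lemma stage_le M n a k k' z : (k <= k')%N -> G_stage M n a k' z -> G_stage M n a k z.
Proof.
elim: k' => [|k' IH]; first by rewrite leqn0 => /eqP ->.
rewrite leq_eqVlt => /orP [/eqP -> //| hk] [h _]; exact: IH.
Qed.

Lemma stage_G0 M n a k z : G_stage M n a k z -> G0_vertex M n a z.
Proof. move=> h; exact: (@stage_le M n a 0 k z (leq0n k) h). Qed.

Definition win (n : nat) (y : int -> rat) (j : int) : seq rat :=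
  mkseq (fun i => y (j + i%:Z)) (2 * n + 1).

Lemma nth_win n y j i : (i < 2 * n + 1)%N -> nth 0 (win n y j) i = y (j + i%:Z).
Proof. by move=> h; rewrite nth_mkseq. Qed.

Lemma size_win n y j : size (win n y j) = (2 * n + 1)%N.
Proof. by rewrite size_mkseq. Qed.

Lemma win_G0 M n a y : (forall j, in_V M n (y j)) ->
  trop_satisfies a n y -> trop_minimal a n y -> forall j, G0_vertex M n a (win n y j).
Proof.
move=> hV hs hm j; split; first exact: size_win.
split; first by move=> i; rewrite size_win => hi; rewrite nth_win.
split.
  move=> k hk; apply: min_twice_ext (hs (j + k%:Z)) => i hi.
  rewrite nth_win; last by lia.
  congr (_ + y _); lia.
move=> jj h1 h2; have ejj : jj = n by lia.
subst jj; have [d [hd hmin]] := hm (j + n%:Z).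
exists d; split=> //; apply: is_min_at_ext hmin => i hi.
rewrite nth_win; last by lia.
congr (_ + y _); lia.
Qed.

Lemma win_arrow n y j : (1 <= n)%N -> G0_arrow n (win n y j) (win n y (j + 1)).
Proof.
move=> hn i hi; rewrite !nth_win; try lia.
congr y; lia.
Qed.

Lemma win_Ga M n a y : (1 <= n)%N -> (forall j, in_V M n (y j)) ->
  trop_satisfies a n y -> trop_minimal a n y -> forall j, Ga_vertex M n a (win n y j).
Proof.
move=> hn hV hs hm j k; elim: k j => [|k IH] j /=; first exact: win_G0.
split; first exact: IH.
split.
  exists (win n y (j - 1)); split; first exact: IH.
  have := @win_arrow n y (j - 1) hn; by rewrite subrK.
exists (win n y (j + 1)); split; first exact: IH.
exact: win_arrow.
Qed.

Lemma G0_win_props M n a y : (forall j, G0_vertex M n a (win n y j)) ->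
  (forall j, in_V M n (y j)) /\ trop_satisfies a n y /\ trop_minimal a n y.
Proof.
move=> h; split.
  move=> j; have [_ [hv _]] := h j.
  have := hv 0%N; rewrite size_win nth_win; last by lia.
  by rewrite addr0; apply; lia.
split.
  move=> k; have [_ [_ [hs _]]] := h k.
  apply: min_twice_ext (hs 0%N (leq0n _)) => i hi.
  rewrite nth_win; last by lia.
  congr (_ + y _); lia.
move=> j; have [_ [_ [_ hm]]] := h (j - n%:Z).
have [d [hd hmin]] := hm n (leqnn _) ltac:(lia).
exists d; split=> //; apply: is_min_at_ext hmin => i hi.
rewrite nth_win; last by lia.
congr (_ + y _); lia.
Qed.

Lemma path_win M n a (P : int -> seq rat) : (1 <= n)%N ->
  (forall j, G0_vertex M n a (P j)) -> (forall j, G0_arrow n (P j) (P (j + 1))) ->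
  forall j, win n (fun t => nth 0 (P t) 0) j = P j.
Proof.
move=> hn hG hA.
have sh : forall i j, (i <= 2 * n)%N -> nth 0 (P j) i = nth 0 (P (j + i%:Z)) 0.
  elim=> [|i IH] j hi; first by rewrite addr0.
  rewrite (hA j i); last by lia.
  rewrite IH; last by lia.
  congr (nth 0 (P _) 0); lia.
move=> j; have [hs _] := hG j.
apply: (@eq_from_nth _ 0); first by rewrite size_win hs.
move=> i; rewrite size_win => hi; rewrite nth_win // (sh i j) //; lia.
Qed.
Lemma uniq_flatten_map (A B : eqType) (h : A -> seq B) (s : seq A) :
  uniq s -> (forall x, x \in s -> uniq (h x)) ->
  (forall x y z, x \in s -> y \in s -> z \in h x -> z \in h y -> x = y) ->
  uniq (flatten (map h s)).
Proof.
elim: s => //= x s IH /andP [hx us] hu hd.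
rewrite cat_uniq; apply/and3P; split.
- by apply: hu; rewrite inE eqxx.
- apply/hasP => -[z /flattenP [c /mapP [y ys ->] zy] zx].
  have exy : x = y by apply: (hd x y z) => //; rewrite inE ?eqxx ?ys ?orbT.
  by move: hx; rewrite exy ys.
- apply: IH => //.
  + by move=> y ys; apply: hu; rewrite inE ys orbT.
  + by move=> y y' z ys ys'; apply: hd; rewrite inE ?ys ?ys' orbT.
Qed.

Lemma iter_mod_order (T : finType) (f : T -> T) (finj : injective f) (r : T) m :
  iter m f r = iter (m %% order f r) f r.
Proof.
rewrite {1}(divn_eq m (order f r)) addnC iterD; congr iter.
elim: (m %/ order f r)%N => [|k IH] //.
by rewrite mulSn iterD IH (iter_order finj).
Qed.

Lemma cycles_of_bij (T : choiceType) (Vx : T -> Prop) (E : T -> T -> Prop)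
    (S : seq T) (g : T -> T) :
  (forall v, Vx v <-> v \in S) ->
  (forall v, Vx v -> Vx (g v) /\ E v (g v)) ->
  (forall u v, Vx u -> Vx v -> E u v -> v = g u) ->
  (forall u u', Vx u -> Vx u' -> g u = g u' -> u = u') ->
  disjoint_union_simple_cycles Vx E.
Proof.
move=> hS hg hE hinj.
have VxS : forall x : seq_sub S, Vx (ssval x) by move=> x; apply/hS; exact: (ssvalP x).
have gS : forall x : seq_sub S, g (ssval x) \in S.
  by move=> x; apply/hS; exact: (hg _ (VxS x)).1.
pose f (x : seq_sub S) : seq_sub S := SeqSub (gS x).
have fE : forall x, ssval (f x) = g (ssval x) by [].
have finj : injective f.
  move=> x y /(congr1 val) => e.
  by apply: val_inj; exact: (hinj _ _ (VxS x) (VxS y) e).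
have fsym : connect_sym (frel f) by move=> x y; apply: (fconnect_sym finj).
have orbE : forall r i, (i < order f r)%N -> nth r (orbit f r) i = iter i f r.
  by move=> r i hi; rewrite /orbit nth_traject.
have nextE : forall r i, (i < order f r)%N ->
    iter (i.+1 %% order f r) f r = f (iter i f r).
  by move=> r i hi; rewrite -(@iter_mod_order _ f finj).
pose cs := [seq map val (orbit f r) | r <- enum (froots f)].
exists cs; split.
  move=> c /mapP [r _ ->] /(congr1 size); rewrite size_map size_orbit.
  by have := order_gt0 f r; case: (order f r).
split.
  apply: uniq_flatten_map; first exact: enum_uniq.
    by move=> r _; rewrite (map_inj_uniq val_inj) orbit_uniq.
  move=> r r' z; rewrite !mem_enum => hr hr' /mapP [x hx ->] /mapP [x' hx' /val_inj ex].
  subst x'.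
  rewrite -fconnect_orbit in hx; rewrite -fconnect_orbit in hx'.
  move/eqP: hr => <-; move/eqP: hr' => <-.
  apply/eqP; rewrite (root_connect fsym); apply: connect_trans hx _.
  by rewrite fsym.
split.
  move=> v; split.
    move=> /hS hv; pose x : seq_sub S := SeqSub hv.
    apply/flattenP; exists (map val (orbit f (froot f x))).
      by apply/mapP; exists (froot f x) => //; rewrite mem_enum; exact: roots_root.
    apply/mapP; exists x => //; rewrite -fconnect_orbit fsym; exact: connect_root.
  by move=> /flattenP [c /mapP [r _ ->] /mapP [x _ ->]]; exact: VxS.
move=> u v hu hv; split.
  move=> huv; have -> := hE u v hu hv huv.
  move/hS: hu => hu; pose x : seq_sub S := SeqSub hu.
  have -> : u = ssval x by [].
  pose r := froot f x.
  have xr : x \in orbit f r by rewrite -fconnect_orbit fsym; exact: connect_root.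
  exists (map val (orbit f r)).
    by apply/mapP; exists r => //; rewrite mem_enum; exact: roots_root.
  exists (index x (orbit f r)).
  have hi : (index x (orbit f r) < order f r)%N by rewrite -size_orbit index_mem.
  rewrite size_map size_orbit; split => //.
  rewrite !(nth_map x) ?size_orbit ?ltn_pmod ?order_gt0 //.
  split; first by rewrite nth_index.
  rewrite (set_nth_default r) ?size_orbit ?ltn_pmod ?order_gt0 //.
  by rewrite orbE ?ltn_pmod ?order_gt0 // nextE // -orbE // nth_index.
move=> [c /mapP [r _ ->] [i [hi [-> ->]]]].
move: hi; rewrite size_map size_orbit => hi.
rewrite !(nth_map (f r)) ?size_orbit ?ltn_pmod ?order_gt0 //.
rewrite !(set_nth_default r) ?size_orbit ?ltn_pmod ?order_gt0 //.
rewrite !orbE ?ltn_pmod ?order_gt0 // nextE //.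
exact: (hg _ (VxS _)).2.
Qed.

Lemma flatten_same (T : eqType) (cs : seq (seq T)) c c' x :
  uniq (flatten cs) -> c \in cs -> c' \in cs -> x \in c -> x \in c' -> c = c'.
Proof.
elim: cs => //= c0 cs IH; rewrite cat_uniq => /and3P [u0 hd ur].
rewrite !inE => /orP [/eqP ->|hc] /orP [/eqP ->|hc'] hx hx' //.
- exfalso; move/negP: hd; apply; apply/hasP; exists x => //; apply/flattenP; by exists c'.
- exfalso; move/negP: hd; apply; apply/hasP; exists x => //; apply/flattenP; by exists c.
- exact: IH.
Qed.

Lemma flatten_uniq_in (T : eqType) (cs : seq (seq T)) c :
  uniq (flatten cs) -> c \in cs -> uniq c.
Proof.
elim: cs => //= c0 cs IH; rewrite cat_uniq => /and3P [u0 _ ur].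
rewrite inE => /orP [/eqP -> //| hc]; exact: IH.
Qed.

Lemma cycles_periodic M n a y : (1 <= n)%N -> (forall j, in_V M n (y j)) ->
  trop_satisfies a n y -> trop_minimal a n y ->
  disjoint_union_simple_cycles (Ga_vertex M n a) (G0_arrow n) -> periodic y.
Proof.
move=> hn hV hs hm [cs [hne [hu [hv hE]]]].
pose w := win n y.
have hG : forall j, Ga_vertex M n a (w j) := win_Ga hn hV hs hm.
have hA : forall j, G0_arrow n (w j) (w (j + 1)) := fun j => @win_arrow n y j hn.
have /flattenP [c cin w0c] : w 0 \in flatten cs by apply/hv.
have uc := flatten_uniq_in hu cin.
have pc : (0 < size c)%N by move: (hne c cin); case: (c).
pose s x := nth (w 0) c ((index x c).+1 %% size c).
have step : forall j, w j \in c -> w (j + 1) \in c /\ w (j + 1) = s (w j).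
  move=> j hj.
  have [c' c'in [i [hi [e1 e2]]]] := (hE _ _ (hG j) (hG (j + 1))).1 (hA j).
  have ec : c' = c.
    by apply: (flatten_same hu c'in cin _ hj); rewrite {1}e1 mem_nth.
  subst c'.
  have ei : index (w j) c = i by rewrite {1}e1 index_uniq.
  split; first by rewrite e2 mem_nth // ltn_pmod.
  by rewrite /s ei e2; apply: set_nth_default; rewrite ltn_pmod.
have back : forall j, w (j + 1) \in c -> w j \in c.
  move=> j hj.
  have [c' c'in [i [hi [e1 e2]]]] := (hE _ _ (hG j) (hG (j + 1))).1 (hA j).
  have ec : c' = c.
    by apply: (flatten_same hu c'in cin _ hj); rewrite e2 mem_nth // ltn_pmod //; exact: leq_ltn_trans (leq0n i) hi.
  by subst c'; rewrite e1 mem_nth.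
have allc : forall j, w j \in c.
  have H : forall m : nat, w m%:Z \in c /\ w (- m%:Z) \in c.
    elim => [|m [IH1 IH2]]; first by rewrite oppr0.
    split.
      have -> : (m.+1)%:Z = m%:Z + 1 by lia.
      exact: (step _ IH1).1.
    apply: back; have -> : - (m.+1)%:Z + 1 = - m%:Z by lia.
    done.
  move=> [m|m]; first exact: (H m).1.
  rewrite NegzE; exact: (H m.+1).2.
have iterE : forall x m, x \in c -> iter m s x = nth (w 0) c ((index x c + m) %% size c).
  move=> x m hx; elim: m => [|m IH].
    by rewrite addn0 modn_small ?index_mem // nth_index.
  rewrite iterS IH /s index_uniq ?ltn_pmod //.
  by rewrite -addn1 modnDml addn1 addnS.
have wE : forall j (m : nat), w (j + m%:Z) = iter m s (w j).
  move=> j; elim=> [|m IH]; first by rewrite addr0.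
  rewrite iterS -IH; have -> : j + m.+1%:Z = (j + m%:Z) + 1 by lia.
  exact: (step _ (allc _)).2.
exists (size c); split => // j.
have := wE j (size c).
rewrite iterE ?allc // modnDr modn_small ?index_mem ?allc // nth_index ?allc // => e.
have := congr1 (fun s => nth 0 s 0) e; rewrite /w !nth_win; first by rewrite !addr0.
  lia.
lia.
Qed.

Definition vals (M n : nat) : seq rat :=
  [seq (j%:R + i%:R / (2 * n + 2)%:R : rat) | j <- iota 0 M, i <- iota 0 (2 * n + 3)].

Lemma in_V_vals M n x : in_V M n x -> x \in vals M n.
Proof.
move=> [j [i [hj [hi ->]]]]; apply/allpairsP; exists (j, i); rewrite /= !mem_iota; split => //; lia.
Qed.

Fixpoint tuples (L : seq rat) (m : nat) : seq (seq rat) :=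
  if m is m'.+1 then [seq x :: t | x <- L, t <- tuples L m'] else [:: [::]].

Lemma mem_tuples L m z : size z = m -> all (mem L) z -> z \in tuples L m.
Proof.
elim: m z => [|m IH] [|x z] //=; try by move=> *; rewrite inE.
move=> [hs].
move=> /andP [hx hz]; apply/allpairsP; exists (x, z); split=> //; exact: IH.
Qed.

Lemma G0_in_tuples M n a z : G0_vertex M n a z -> z \in tuples (vals M n) (2 * n + 1).
Proof.
move=> [hs [hv _]]; apply: mem_tuples => //; apply/(all_nthP 0) => i hi.
apply: in_V_vals; exact: hv.
Qed.

Lemma pigeon (T : eqType) (L : seq T) (P : nat -> T -> Prop) :
  (forall k w, P k.+1 w -> P k w) -> (forall k, exists2 w, w \in L & P k w) ->
  exists2 w, w \in L & forall k, P k w.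
Proof.
move=> mono h; apply: NNPP => hn.
have anti : forall k k' w, (k <= k')%N -> P k' w -> P k w.
  move=> k k' w; elim: k' => [|k' IH]; first by rewrite leqn0 => /eqP ->.
  rewrite leq_eqVlt => /orP [/eqP -> //| hk] hp; apply: IH => //; exact: mono.
have H : forall L' : seq T, {subset L' <= L} -> exists K, forall w, w \in L' -> ~ P K w.
  elim=> [|w L' IH] hsub; first by exists 0%N.
  have [K2 hK2] : exists K, forall w, w \in L' -> ~ P K w.
    by apply: IH => x hx; apply: hsub; rewrite inE hx orbT.
  have [K1 hK1] : exists k, ~ P k w.
    apply: not_all_ex_not => hall; apply: hn; exists w => //.
    by apply: hsub; rewrite inE eqxx.
  exists (maxn K1 K2) => x; rewrite inE => /orP [/eqP ->|hx] hp.
    by apply: hK1; apply: anti hp; exact: leq_maxl.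
  by apply: (hK2 x hx); apply: anti hp; exact: leq_maxr.
have [K hK] := H L (fun x hx => hx).
have [w wL hw] := h K; exact: (hK w wL hw).
Qed.

Lemma out_nb M n a v : Ga_vertex M n a v -> exists w, Ga_vertex M n a w /\ G0_arrow n v w.
Proof.
move=> hv.
have [w _ hw] : exists2 w, w \in tuples (vals M n) (2 * n + 1) &
    forall k, G_stage M n a k w /\ G0_arrow n v w.
  apply: pigeon; first by move=> k w [[h _] ?]; split.
  move=> k; have [_ [_ [w [hw ha]]]] := hv k.+1.
  by exists w; [apply: G0_in_tuples; exact: (stage_G0 hw) | split].
by exists w; split; [move=> k; exact: (hw k).1 | exact: (hw 0%N).2].
Qed.

Lemma in_nb M n a v : Ga_vertex M n a v -> exists w, Ga_vertex M n a w /\ G0_arrow n w v.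
Proof.
move=> hv.
have [w _ hw] : exists2 w, w \in tuples (vals M n) (2 * n + 1) &
    forall k, G_stage M n a k w /\ G0_arrow n w v.
  apply: pigeon; first by move=> k w [[h _] ?]; split.
  move=> k; have [_ [[w [hw ha]] _]] := hv k.+1.
  by exists w; [apply: G0_in_tuples; exact: (stage_G0 hw) | split].
by exists w; split; [move=> k; exact: (hw k).1 | exact: (hw 0%N).2].
Qed.

Definition nx M n a v := epsilon (inhabits ([::] : seq rat))
  (fun w => Ga_vertex M n a w /\ G0_arrow n v w).
Definition pr M n a v := epsilon (inhabits ([::] : seq rat))
  (fun w => Ga_vertex M n a w /\ G0_arrow n w v).

Lemma nxP M n a v : Ga_vertex M n a v ->
  Ga_vertex M n a (nx M n a v) /\ G0_arrow n v (nx M n a v).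
Proof. move=> hv; exact: (epsilon_spec _ _ (out_nb hv)). Qed.

Lemma prP M n a v : Ga_vertex M n a v ->
  Ga_vertex M n a (pr M n a v) /\ G0_arrow n (pr M n a v) v.
Proof. move=> hv; exact: (epsilon_spec _ _ (in_nb hv)). Qed.

Lemma iter_nx M n a m v : Ga_vertex M n a v -> Ga_vertex M n a (iter m (nx M n a) v).
Proof. by move=> hv; elim: m => //= m IH; exact: (nxP IH).1. Qed.

Lemma iter_pr M n a m v : Ga_vertex M n a v -> Ga_vertex M n a (iter m (pr M n a) v).
Proof. by move=> hv; elim: m => //= m IH; exact: (prP IH).1. Qed.

Lemma periodic_mul (y : int -> rat) d : (forall j, y (j + d%:Z) = y j) ->
  forall m j, y (j + (m * d)%N%:Z) = y j.
Proof.
move=> hd; elim=> [|m IH] j; first by rewrite mul0n addr0.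
have -> : j + (m.+1 * d)%N%:Z = (j + d%:Z) + (m * d)%N%:Z by rewrite mulSn PoszD addrA.
by rewrite IH hd.
Qed.

Lemma periodic_eq_left (y y' : int -> rat) : periodic y -> periodic y' ->
  (forall t, t <= 0 -> y t = y' t) -> forall t, y t = y' t.
Proof.
move=> [d [hd py]] [d' [hd' py']] h t.
pose K := (`|t|%N * d * d')%N.
have hK : (`|t| <= K)%N by rewrite /K -mulnA leq_pmulr // muln_gt0 hd hd'.
have e1 := periodic_mul py (`|t| * d')%N (t - K%:Z).
have e2 := periodic_mul py' (`|t| * d)%N (t - K%:Z).
rewrite mulnAC -/K subrK in e1.
rewrite -/K subrK in e2.
rewrite e1 e2; apply: h; lia.
Qed.

Lemma periodic_eq_right (y y' : int -> rat) : periodic y -> periodic y' ->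
  (forall t, 0 <= t -> y t = y' t) -> forall t, y t = y' t.
Proof.
move=> [d [hd py]] [d' [hd' py']] h t.
pose K := (`|t|%N * d * d')%N.
have hK : (`|t| <= K)%N by rewrite /K -mulnA leq_pmulr // muln_gt0 hd hd'.
have e1 := periodic_mul py (`|t| * d')%N t.
have e2 := periodic_mul py' (`|t| * d)%N t.
rewrite mulnAC -/K in e1.
rewrite -/K in e2.
rewrite -e1 -e2; apply: h; lia.
Qed.

Definition glue (F B : nat -> seq rat) (j : int) : seq rat :=
  match j with Posz m => F m | Negz m => B m.+1 end.

Lemma glue_arrow n (F B : nat -> seq rat) : F 0%N = B 0%N ->
  (forall m, G0_arrow n (F m) (F m.+1)) -> (forall m, G0_arrow n (B m.+1) (B m)) ->
  forall j, G0_arrow n (glue F B j) (glue F B (j + 1)).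
Proof.
move=> e hF hB [m|m].
  have -> : Posz m + 1 = Posz m.+1 by lia.
  exact: hF.
case: m => [|m].
  have -> : Negz 0 + 1 = Posz 0 by [].
  by rewrite /= e; exact: hB.
have -> : Negz m.+1 + 1 = Negz m by rewrite !NegzE; lia.
exact: hB.
Qed.

Lemma glue_props M n a (F B : nat -> seq rat) : (1 <= n)%N ->
  (forall y : int -> rat, (forall j, in_V M n (y j)) ->
      trop_satisfies a n y -> trop_minimal a n y -> periodic y) ->
  F 0%N = B 0%N -> (forall m, Ga_vertex M n a (F m)) -> (forall m, Ga_vertex M n a (B m)) ->
  (forall m, G0_arrow n (F m) (F m.+1)) -> (forall m, G0_arrow n (B m.+1) (B m)) ->
  periodic (fun t => nth 0 (glue F B t) 0) /\
  forall j, win n (fun t => nth 0 (glue F B t) 0) j = glue F B j.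
Proof.
move=> hn HP e hF hB aF aB.
have hG : forall j, G0_vertex M n a (glue F B j).
  by move=> [m|m] /=; apply: (@stage_G0 M n a 0%N); [exact: hF | exact: hB].
have hw := path_win hn hG (glue_arrow e aF aB).
split=> //.
have [h1 [h2 h3]] := @G0_win_props M n a (fun t => nth 0 (glue F B t) 0)
  (fun j => eq_ind_r _ (hG j) (hw j)).
exact: HP.
Qed.

Lemma out_unique M n a : (1 <= n)%N ->
  (forall y : int -> rat, (forall j, in_V M n (y j)) ->
      trop_satisfies a n y -> trop_minimal a n y -> periodic y) ->
  forall v w w', Ga_vertex M n a v -> Ga_vertex M n a w -> Ga_vertex M n a w' ->
  G0_arrow n v w -> G0_arrow n v w' -> w = w'.
Proof.
move=> hn HP v w w' hv hw hw' a1 a2.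
pose B m := iter m (pr M n a) v.
have hB : forall m, Ga_vertex M n a (B m) by move=> m; exact: iter_pr.
have aB : forall m, G0_arrow n (B m.+1) (B m) by move=> m; exact: (prP (hB m)).2.
pose F x m := if m is m'.+1 then iter m' (nx M n a) x else v.
have hF : forall x, Ga_vertex M n a x -> forall m, Ga_vertex M n a (F x m).
  by move=> x hx [|m] //=; exact: iter_nx.
have aF : forall x, Ga_vertex M n a x -> G0_arrow n v x -> forall m, G0_arrow n (F x m) (F x m.+1).
  by move=> x hx hvx [|m] //=; exact: (nxP (iter_nx m hx)).2.
have [p1 w1] := glue_props (F:=F w) (B:=B) hn HP erefl (hF w hw) hB (aF w hw a1) aB.
have [p2 w2] := glue_props (F:=F w') (B:=B) hn HP erefl (hF w' hw') hB (aF w' hw' a2) aB.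
have agree : forall t, t <= 0 ->
    nth 0 (glue (F w) B t) 0 = nth 0 (glue (F w') B t) 0.
  by move=> [m|m] ht //=; have -> : m = 0%N by lia.
have eq := periodic_eq_left p1 p2 agree.
have := w1 1; have := w2 1.
have -> : win n (fun t => nth 0 (glue (F w) B t) 0) 1 = win n (fun t => nth 0 (glue (F w') B t) 0) 1.
  by apply: eq_mkseq => i; rewrite eq.
by move=> e2 e1; rewrite e2 /= in e1.
Qed.

Lemma in_unique M n a : (1 <= n)%N ->
  (forall y : int -> rat, (forall j, in_V M n (y j)) ->
      trop_satisfies a n y -> trop_minimal a n y -> periodic y) ->
  forall v x x', Ga_vertex M n a v -> Ga_vertex M n a x -> Ga_vertex M n a x' ->
  G0_arrow n x v -> G0_arrow n x' v -> x = x'.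
Proof.
move=> hn HP v x x' hv hx hx' a1 a2.
pose F m := iter m (nx M n a) v.
have hF : forall m, Ga_vertex M n a (F m) by move=> m; exact: iter_nx.
have aF : forall m, G0_arrow n (F m) (F m.+1) by move=> m; exact: (nxP (hF m)).2.
pose B u m := if m is m'.+1 then iter m' (pr M n a) u else v.
have hB : forall u, Ga_vertex M n a u -> forall m, Ga_vertex M n a (B u m).
  by move=> u hu [|m] //=; exact: iter_pr.
have aB : forall u, Ga_vertex M n a u -> G0_arrow n u v -> forall m, G0_arrow n (B u m.+1) (B u m).
  by move=> u hu huv [|m] //=; exact: (prP (iter_pr m hu)).2.
have [p1 w1] := glue_props (F:=F) (B:=B x) hn HP erefl hF (hB x hx) aF (aB x hx a1).
have [p2 w2] := glue_props (F:=F) (B:=B x') hn HP erefl hF (hB x' hx') aF (aB x' hx' a2).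
have agree : forall t, 0 <= t ->
    nth 0 (glue F (B x) t) 0 = nth 0 (glue F (B x') t) 0.
  by move=> [m|m] ht //=; exfalso; move: ht; rewrite NegzE; lia.
have eq := periodic_eq_right p1 p2 agree.
have := w1 (Negz 0); have := w2 (Negz 0).
have -> : win n (fun t => nth 0 (glue F (B x) t) 0) (Negz 0) =
          win n (fun t => nth 0 (glue F (B x') t) 0) (Negz 0).
  by apply: eq_mkseq => i; rewrite eq.
by move=> e2 e1; rewrite e2 /= in e1.
Qed.

Definition Gab M n a (v : seq rat) : bool :=
  if excluded_middle_informative (Ga_vertex M n a v) then true else false.

Lemma GabP M n a v : Gab M n a v <-> Ga_vertex M n a v.
Proof. by rewrite /Gab; case: excluded_middle_informative. Qed.

Lemma main_fwd M n a : (1 <= n)%N ->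
  (forall y : int -> rat, (forall j, in_V M n (y j)) ->
      trop_satisfies a n y -> trop_minimal a n y -> periodic y) ->
  disjoint_union_simple_cycles (Ga_vertex M n a) (G0_arrow n).
Proof.
move=> hn HP.
apply: (@cycles_of_bij _ _ _ [seq v <- tuples (vals M n) (2 * n + 1) | Gab M n a v] (nx M n a)).
- move=> v; rewrite mem_filter; split.
    move=> hv; apply/andP; split; first exact/GabP.
    apply: G0_in_tuples; exact: (@stage_G0 M n a 0%N).
  by move=> /andP [/GabP].
- by move=> v hv; exact: nxP.
- move=> u v hu hv huv; apply: (out_unique hn HP hu hv (nxP hu).1 huv (nxP hu).2).
- move=> u u' hu hu' e; apply: (in_unique hn HP (nxP hu).1 hu hu' (nxP hu).2).
  by rewrite e; exact: (nxP hu').2.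
Qed.

Unset Implicit Arguments.

Theorem lemma2 (n M : nat) (a : nat -> int) :
  (1 <= n)%N -> (1 <= M)%N ->
  (forall i : nat, (i <= n)%N -> 0 <= a i <= M%:Z) ->
  a 0%N = 0 -> a n = 0 ->
  ((forall y : int -> rat,
      (forall j : int, in_V M n (y j)) ->
      trop_satisfies a n y -> trop_minimal a n y -> periodic y)
   <->
   disjoint_union_simple_cycles (Ga_vertex M n a) (G0_arrow n)).
Proof.
move=> hn _ _ _ _; split; first exact: main_fwd.
move=> hc y hV hs hm; exact: (cycles_periodic hn hV hs hm hc).
Qed.
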